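(* Let $\mathcal{I}$ and $\mathcal{J}$ be isomorphic sharp interval systems. For every hypergraph isomorphism $\psi$ from $\mathcal{I}$ to $\mathcal{J}$ there is a hypergraph isomorphism $\psi'$ from $\mathcal{I}$ to $\mathcal{J}$ such that $\psi'(A)=\psi(A)$ for all $A\in\mathcal{I}$ and, moreover, $\psi'$ maps the two extreme points of each interval $A\in\mathcal{I}$ onto the two extreme points of the interval $\psi(A)\in\mathcal{J}$.
   Context: An interval system is a hypergraph whose vertex set is $\{1,\dots,N\}$ and whose hyperedges are intervals of consecutive integers $[a,b]=\{a,a+1,\dots,b\}$; the extreme points of $[a,b]$ are $a$ and $b$. An interval system with $m$ intervals is sharp if $N=2m$ and the $2m$ extreme points of its intervals are pairwise distinct (so every point is the start or the end point of exactly one interval). A hypergraph isomorphism from $\mathcal{I}$ to $\mathcal{J}$ is a bijection between their vertex sets mapping the set of hyperedges of $\mathcal{I}$ onto that of $\mathcal{J}$. *)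

(* Defs.v *)
(* Vertex set {1,...,N} is represented by 'I_N = {0,...,N-1}
   (shift by one, order preserved). *)
From mathcomp Require Import all_boot.
Set Implicit Arguments. Unset Strict Implicit. Unset Printing Implicit Defensive.

Definition interval_of (N : nat) (a b : 'I_N) : {set 'I_N} :=
  [set x : 'I_N | (a <= x <= b)%N].

Definition is_interval (N : nat) (A : {set 'I_N}) : Prop :=
  exists a b : 'I_N, (a <= b)%N /\ A = interval_of a b.

Definition interval_system (N : nat) (I : {set {set 'I_N}}) : Prop :=
  forall A, A \in I -> is_interval A.

Definition extremes (N : nat) (A : {set 'I_N}) : {set 'I_N} :=
  [set x in A | [forall y in A, (x <= y)%N] || [forall y in A, (y <= x)%N]].

Definition sharp (N : nat) (I : {set {set 'I_N}}) : Prop :=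
  [/\ interval_system I,
      N = (2 * #|I|)%N,
      forall A, A \in I -> #|extremes A| = 2 &
      forall A B, A \in I -> B \in I -> A != B ->
        [disjoint extremes A & extremes B]].

Definition hyp_iso (N M : nat) (I : {set {set 'I_N}}) (J : {set {set 'I_M}})
    (psi : 'I_N -> 'I_M) : Prop :=
  bijective psi /\ [set psi @: (A : {set 'I_N}) | A in I] = J.

(* Main.v *)
Require Import Defs.
From mathcomp Require Import all_boot.
Set Implicit Arguments. Unset Strict Implicit. Unset Printing Implicit Defensive.
From mathcomp Require Import zify.


Definition typ (V : finType) (I : {set {set V}}) (x : V) := [set A in I | x \in A].
Definition cls (V : finType) (I : {set {set V}}) (S : {set {set V}}) := [set x | typ I x == S].
Definition capS (V : finType) (S : {set {set V}}) := [set x : V | [forall B in S, x \in B]].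
Definition Gs (V : finType) (S : {set {set V}}) :=
  if #|S| == 1 then S else [set B in S | capS (S :\ B) != capS S].
Definition Ks (V : finType) (I S : {set {set V}}) (B : {set V}) :=
  [forall E in I :\: S, ~~ [exists u, [exists v, [&& u \in E, v \in E, u \in capS S &
      v \in capS (S :\ B) :\: B]]]].
Definition Ds (V : finType) (I S : {set {set V}}) :=
  if #|Gs S| == 1 then Gs S else [set B in Gs S | Ks I S B].
Definition Fs (V : finType) (I S : {set {set V}}) (A : {set V}) :=
  if (A \in Ds I S) && (0 < #|cls I S|) then (if #|Ds I S| == 1 then #|cls I S| else 1) else 0.

Ltac slia := repeat match goal with
 | H : is_true (_ <= _) |- _ => revert H
 | H : (_ = _ :> nat) |- _ => revert H
 end; repeat match goal with H : _ |- _ => clear H end; cbv beta; lia.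

Lemma card2b (T : finType) (a b : T) (p q : bool) : a != b ->
  #|[set x | ((x == a) && p) || ((x == b) && q)]| = p + q.
Proof.
move=> ab; case: p; case: q => /=.
- have -> : [set x | ((x == a) && true) || ((x == b) && true)] = [set a; b].
    by apply/setP => x; rewrite !inE !andbT.
  by rewrite cards2 ab.
- have -> : [set x | ((x == a) && true) || ((x == b) && false)] = [set a].
    by apply/setP => x; rewrite !inE !andbT andbF orbF.
  by rewrite cards1.
- have -> : [set x | ((x == a) && false) || ((x == b) && true)] = [set b].
    by apply/setP => x; rewrite !inE !andbT andbF.
  by rewrite cards1.
- have -> : [set x | ((x == a) && false) || ((x == b) && false)] = set0.
    by apply/setP => x; rewrite !inE !andbF.
  by rewrite cards0.
Qed.

Section Geo.
Variables (V : finType) (r : V -> nat) (x0 : V).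
Hypothesis r_inj : injective r.
Variable I : {set {set V}}.

Definition rint a b := [set x | r a <= r x <= r b].
Definition ext (A : {set V}) := [set x in A |
  [forall y in A, r x <= r y] || [forall y in A, r y <= r x]].
Definition st (A : {set V}) := odflt x0 [pick x in A | [forall y in A, r x <= r y]].
Definition en (A : {set V}) := odflt x0 [pick x in A | [forall y in A, r y <= r x]].

Hypothesis H_int : forall A, A \in I -> exists a b, r a <= r b /\ A = rint a b.
Hypothesis H_two : forall A, A \in I -> #|ext A| = 2.
Hypothesis H_dis : forall A B, A \in I -> B \in I -> A != B -> [disjoint ext A & ext B].
Hypothesis H_cov : forall x, exists2 A, A \in I & x \in ext A.

Lemma in_rint a b x : (x \in rint a b) = (r a <= r x <= r b).
Proof. by rewrite inE. Qed.

Lemma rint_facts a b : r a <= r b ->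
  [/\ st (rint a b) = a, en (rint a b) = b & ext (rint a b) = [set a; b]].
Proof.
move=> hab; split.
- rewrite /st; case: pickP => [x /andP [xin /forallP hx] | /(_ a)] /=.
    apply: r_inj; apply/eqP; rewrite eqn_leq.
    move: (hx a); rewrite !in_rint leqnn hab /= => ->.
    by move: xin; rewrite in_rint => /andP[-> _].
  rewrite in_rint leqnn hab /=.
  suff -> : [forall (y | y \in rint a b), r a <= r y] by [].
  by apply/forallP => y; apply/implyP; rewrite in_rint => /andP[].
- rewrite /en; case: pickP => [x /andP [xin /forallP hx] | /(_ b)] /=.
    apply: r_inj; apply/eqP; rewrite eqn_leq.
    move: (hx b); rewrite !in_rint leqnn hab /= => ->.
    by move: xin; rewrite in_rint => /andP[_ ->].
  rewrite in_rint leqnn hab /=.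
  suff -> : [forall (y | y \in rint a b), r y <= r b] by [].
  by apply/forallP => y; apply/implyP; rewrite in_rint => /andP[].
- apply/setP => x; rewrite !inE.
  apply/idP/idP.
  + case/andP => /andP[h1 h2] /orP[] /forallP h.
      move: (h a); rewrite in_rint leqnn hab /= => h3.
      by apply/orP; left; apply/eqP; apply: r_inj; slia.
    move: (h b); rewrite in_rint leqnn hab /= => h3.
    by apply/orP; right; apply/eqP; apply: r_inj; slia.
  + case/orP => /eqP ->.
      rewrite leqnn hab /=; apply/orP; left; apply/forallP => y.
      by apply/implyP; rewrite in_rint => /andP[].
    rewrite leqnn hab /=; apply/orP; right; apply/forallP => y.
    by apply/implyP; rewrite in_rint => /andP[].
Qed.

Lemma int_props A : A \in I ->
  [/\ A = rint (st A) (en A), r (st A) < r (en A) & ext A = [set st A; en A]].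
Proof.
move=> AI; have [a [b [hab eA]]] := H_int AI.
have [hs he hx] := rint_facts hab.
move: (H_two AI); rewrite eA hs he hx cards2.
case: eqP => // ab _; split => //.
rewrite ltn_neqAle hab andbT; apply/eqP => h; apply: ab; exact: r_inj.
Qed.

Lemma memI A x : A \in I -> (x \in A) = (r (st A) <= r x <= r (en A)).
Proof. by move=> /int_props[eA _ _]; rewrite {1}eA in_rint. Qed.

Lemma st_lt A : A \in I -> r (st A) < r (en A).
Proof. by case/int_props. Qed.

Lemma extE A : A \in I -> ext A = [set st A; en A].
Proof. by case/int_props. Qed.

Lemma ext_uniq A B x : A \in I -> B \in I -> x \in ext A -> x \in ext B -> A = B.
Proof.
move=> AI BI xA xB; apply/eqP; apply/negPn/negP => nAB.
by rewrite (disjointFr (H_dis AI BI nAB) xA) in xB.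
Qed.

Lemma st_ext A : A \in I -> st A \in ext A.
Proof. by move=> AI; rewrite extE // !inE eqxx. Qed.
Lemma en_ext A : A \in I -> en A \in ext A.
Proof. by move=> AI; rewrite extE // !inE eqxx orbT. Qed.

Lemma st_inj A B : A \in I -> B \in I -> st A = st B -> A = B.
Proof. move=> AI BI e; apply: (ext_uniq AI BI (st_ext AI)); rewrite e; exact: st_ext. Qed.
Lemma en_inj A B : A \in I -> B \in I -> en A = en B -> A = B.
Proof. move=> AI BI e; apply: (ext_uniq AI BI (en_ext AI)); rewrite e; exact: en_ext. Qed.
Lemma st_en A B : A \in I -> B \in I -> st A <> en B.
Proof.
move=> AI BI e; have AB : A = B.
  apply: (ext_uniq AI BI (st_ext AI)); rewrite e; exact: en_ext.
subst B; move: (st_lt AI); rewrite e; slia.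
Qed.

Lemma ext_sub A : ext A \subset A.
Proof. by apply/subsetP => x; rewrite inE => /andP[]. Qed.

Lemma capP (S : {set {set V}}) x : reflect (forall B, B \in S -> x \in B) (x \in capS S).
Proof.
rewrite inE; apply: (iffP forallP) => h B; first by move=> BS; move: (h B); rewrite BS.
by apply/implyP; apply: h.
Qed.

Lemma typP x A : (A \in typ I x) = (A \in I) && (x \in A).
Proof. by rewrite inE. Qed.

Lemma cls_cap S x : x \in cls I S -> x \in capS S.
Proof.
rewrite inE => /eqP <-; apply/capP => B; by rewrite typP => /andP[].
Qed.

Section Fixed.
Variables (S : {set {set V}}) (AL AR : {set V}).
Hypothesis SI : S \subset I.
Hypothesis ALS : AL \in S.
Hypothesis ARS : AR \in S.
Hypothesis maxL : forall B, B \in S -> r (st B) <= r (st AL).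
Hypothesis minR : forall B, B \in S -> r (en AR) <= r (en B).
Hypothesis LleR : r (st AL) <= r (en AR).

Let L := st AL.
Let R := en AR.

Lemma inSI B : B \in S -> B \in I.
Proof. by move=> BS; apply: (subsetP SI). Qed.

Lemma capE x : (x \in capS S) = (r L <= r x <= r R).
Proof.
apply/capP/idP.
  move=> h; move: (h _ ALS) (h _ ARS); rewrite !memI ?inSI //.
  by case/andP => -> _ /andP[_ ->].
move=> /andP[h1 h2] B BS; rewrite memI ?inSI //.
by move: (maxL BS) (minR BS); rewrite -/L -/R => h3 h4; apply/andP; split; slia.
Qed.

Lemma cls_LR x : x \in cls I S -> x = L \/ x = R.
Proof.
move=> xc; have := cls_cap xc; rewrite capE => /andP[h1 h2].
have [B BI xB] := H_cov x.
have BS : B \in S.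
  by move: xc; rewrite inE => /eqP <-; rewrite typP BI; apply: (subsetP (ext_sub B)).
move: xB; rewrite extE // !inE => /orP[] /eqP ex.
  by left; apply: r_inj; move: (maxL BS); rewrite -ex -/L; slia.
by right; apply: r_inj; move: (minR BS); rewrite -ex -/R; slia.
Qed.

Lemma hcap1 C : C \in S -> C != AL ->
  exists v, r v < r L /\ forall w, r v <= r w <= r R -> w \in capS (S :\ AL).
Proof.
move=> CS CAL.
have C1 : C \in S :\ AL by rewrite !inE CAL.
case: (arg_maxnP (fun B => r (st B)) C1) => C' C'in hC'.
have : C' \in S :\ AL := C'in.
rewrite !inE => /andP[C'AL C'S].
exists (st C'); split.
  have := maxL C'S; rewrite leq_eqVlt => /orP[/eqP e|//].
  by move: C'AL; rewrite (st_inj (inSI C'S) (inSI ALS) (r_inj e)) eqxx.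
move=> w /andP[h1 h2]; apply/capP => D /[dup] DS' /[!inE] /andP[DAL DS].
rewrite memI ?inSI //; move: (hC' D DS') (minR DS); rewrite /= -/R => h3 h4.
apply/andP; split; slia.
Qed.

Lemma hcap2 C : C \in S -> C != AR ->
  exists v, r R < r v /\ forall w, r L <= r w <= r v -> w \in capS (S :\ AR).
Proof.
move=> CS CAR.
have C1 : C \in S :\ AR by rewrite !inE CAR.
case: (arg_minnP (fun B => r (en B)) C1) => C' C'in hC'.
have : C' \in S :\ AR := C'in.
rewrite !inE => /andP[C'AR C'S].
exists (en C'); split.
  have := minR C'S; rewrite leq_eqVlt => /orP[/eqP e|//].
  by move: C'AR; rewrite (en_inj (inSI C'S) (inSI ARS) (esym (r_inj e))) eqxx.
move=> w /andP[h1 h2]; apply/capP => D /[dup] DS' /[!inE] /andP[DAR DS].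
rewrite memI ?inSI //; move: (hC' D DS') (maxL DS); rewrite /= -/L => h3 h4.
apply/andP; split; slia.
Qed.

Lemma cap_typ x : x \in capS S -> S \subset typ I x.
Proof.
move=> /capP h; apply/subsetP => B BS; rewrite typP inSI //; exact: h.
Qed.

Lemma capD_eq B : B \in S -> B != AL -> B != AR -> capS (S :\ B) = capS S.
Proof.
move=> BS BL BR; apply/setP => x; apply/capP/capP.
  move=> h; suff: x \in capS S by move/capP.
  rewrite capE; move: (h AL) (h AR); rewrite !inE eq_sym BL eq_sym BR ALS ARS.
  move=> /(_ isT) h1 /(_ isT) h2; move: h1 h2; rewrite !memI ?inSI // -/L -/R.
  by case/andP => -> _ /andP[_ ->].
by move=> h D; rewrite inE => /andP[_ /h].
Qed.

Lemma capD_AL1 C : C \in S -> C != AL -> capS (S :\ AL) != capS S.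
Proof.
move=> CS CL; have [v [hv hw]] := hcap1 CS CL.
have: v \in capS (S :\ AL) by apply: hw; rewrite leqnn /=; move: LleR; rewrite -/L -/R; slia.
apply: contraL => /eqP ->; rewrite capE -/L; slia.
Qed.

Lemma capD_AR1 C : C \in S -> C != AR -> capS (S :\ AR) != capS S.
Proof.
move=> CS CR; have [v [hv hw]] := hcap2 CS CR.
have: v \in capS (S :\ AR) by apply: hw; rewrite leqnn andbT; move: LleR; rewrite -/L -/R; slia.
apply: contraL => /eqP ->; rewrite capE -/R; slia.
Qed.

Lemma other_in B : B \in S -> #|S| != 1 -> exists2 C, C \in S & C != B.
Proof.
move=> BS h; have h2: #|S :\ B| != 0.
  by move: h; rewrite (cardsD1 B S) BS add1n; case: (#|S :\ B|).
have: S :\ B != set0 by apply: contra h2 => /eqP ->; rewrite cards0.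
by case/set0Pn => C; rewrite !inE => /andP[CB CS]; exists C.
Qed.

Lemma Gs_gen : #|S| != 1 -> Gs S = [set B in S | (B == AL) || (B == AR)].
Proof.
move=> h; rewrite /Gs (negbTE h); apply/setP => B; rewrite !inE.
case BS: (B \in S) => //=.
case: (eqVneq B AL) => [->|BL] /=.
  have [C CS CL] := other_in ALS h; exact: capD_AL1 CS CL.
case: (eqVneq B AR) => [->|BR] /=.
  have [C CS CR] := other_in ARS h; exact: capD_AR1 CS CR.
by rewrite capD_eq // eqxx.
Qed.

Lemma K_AL x1 : x1 \in cls I S -> AL != AR -> Ks I S AL = (L \in cls I S).
Proof.
move=> x1c LR.
have ALI := inSI ALS; have ARI := inSI ARS.
have Lcap : L \in capS S by rewrite capE leqnn LleR.
apply/idP/idP; last first.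
  move=> bL; apply/forallP => E; apply/implyP; rewrite !inE => /andP[ES EI].
  apply/negP => /existsP[u /existsP[v /and4P[uE vE uc]]].
  rewrite in_setD => /andP[vAL vc].
  have vAR : v \in AR by move/capP: vc; apply; rewrite !inE ARS eq_sym LR.
  move: uc; rewrite capE => /andP[hu1 hu2].
  have LE : L \in E.
    move: uE vE vAR vAL (minR ALS); rewrite !memI // -/L -/R.
    move=> /andP[h1 h2] /andP[h3 h4] /andP[h5 h6]; rewrite negb_and -!ltnNge.
    case/orP => h7 h8; apply/andP; split; slia.
  move: bL; rewrite inE => /eqP eL; move: ES; by rewrite -eL typP EI LE.
apply: contraLR => nbL.
have bR : R \in cls I S.
  case: (cls_LR x1c) => e; last by rewrite -e.
  by rewrite e in x1c; rewrite x1c in nbL.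
have : ~~ (typ I L \subset S).
  apply: contra nbL => sub; rewrite inE eqEsubset sub cap_typ //.
case/subsetPn => E; rewrite typP => /andP[EI LE] ES.
have RL : AR != AL by rewrite eq_sym.
have [v [hv hw]] := hcap1 ARS RL.
have EAL : E != AL by apply: contraNneq ES => ->.
have stEL : r (st E) != r L.
  by apply: contra_neq EAL => h; exact: st_inj EI ALI (r_inj h).
have LE' := LE.
move: LE; rewrite memI // => /andP[h1 h2].
pose v' := if r (st E) <= r v then v else st E.
have hv1 : r v <= r v' /\ r (st E) <= r v' /\ r v' < r L.
  have hsE : r (st E) < r L by rewrite ltn_neqAle stEL h1.
  rewrite /v'; case: (leqP (r (st E)) (r v)) => h; (split; [|split]); slia.
move: hv1 => [hv1 [hv2 hv3]].
have v'E : v' \in E by rewrite memI //; apply/andP; split; slia.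
have v'c : v' \in capS (S :\ AL) by apply: hw; apply/andP; split; move: LleR; rewrite -/L -/R; slia.
have v'AL : v' \notin AL by rewrite memI // -/L negb_and -ltnNge hv3.
rewrite /Ks; apply/negP => /forallP /(_ E); rewrite !inE ES EI /= => /negP; apply.
apply/existsP; exists L; apply/existsP; exists v'.
by rewrite LE' v'E Lcap in_setD v'AL v'c.
Qed.

Lemma K_AR x1 : x1 \in cls I S -> AL != AR -> Ks I S AR = (R \in cls I S).
Proof.
move=> x1c LR.
have ALI := inSI ALS; have ARI := inSI ARS.
have Rcap : R \in capS S by rewrite capE leqnn LleR.
apply/idP/idP; last first.
  move=> bR; apply/forallP => E; apply/implyP; rewrite !inE => /andP[ES EI].
  apply/negP => /existsP[u /existsP[v /and4P[uE vE uc]]].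
  rewrite in_setD => /andP[vAR vc].
  have vAL : v \in AL by move/capP: vc; apply; rewrite !inE ALS LR.
  move: uc; rewrite capE => /andP[hu1 hu2].
  have RE : R \in E.
    move: uE vE vAL vAR (maxL ARS); rewrite !memI // -/L -/R.
    move=> /andP[h1 h2] /andP[h3 h4] /andP[h5 h6]; rewrite negb_and -!ltnNge.
    case/orP => h7 h8; apply/andP; split; slia.
  move: bR; rewrite inE => /eqP eR; move: ES; by rewrite -eR typP EI RE.
apply: contraLR => nbR.
have bL : L \in cls I S.
  case: (cls_LR x1c) => e; first by rewrite -e.
  by rewrite e in x1c; rewrite x1c in nbR.
have : ~~ (typ I R \subset S).
  apply: contra nbR => sub; rewrite inE eqEsubset sub cap_typ //.
case/subsetPn => E; rewrite typP => /andP[EI RE] ES.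
have [v [hv hw]] := hcap2 ALS LR.
have EAR : E != AR by apply: contraNneq ES => ->.
have enER : r (en E) != r R.
  by apply: contra_neq EAR => h; exact: en_inj EI ARI (r_inj h).
have RE' := RE.
move: RE; rewrite memI // => /andP[h1 h2].
pose v' := if r v <= r (en E) then v else en E.
have hv1 : r v' <= r v /\ r v' <= r (en E) /\ r R < r v'.
  have heE : r R < r (en E) by rewrite ltn_neqAle eq_sym enER h2.
  rewrite /v'; case: (leqP (r v) (r (en E))) => h; (split; [|split]); slia.
move: hv1 => [hv1 [hv2 hv3]].
have v'E : v' \in E by rewrite memI //; apply/andP; split; slia.
have v'c : v' \in capS (S :\ AR) by apply: hw; apply/andP; split; move: LleR; rewrite -/L -/R; slia.
have v'AR : v' \notin AR by rewrite memI // -/R negb_and -!ltnNge hv3 orbT.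
rewrite /Ks; apply/negP => /forallP /(_ E); rewrite !inE ES EI /= => /negP; apply.
apply/existsP; exists R; apply/existsP; exists v'.
by rewrite RE' v'E Rcap in_setD v'AR v'c.
Qed.

Lemma clsE : cls I S =
  [set x | ((x == L) && (L \in cls I S)) || ((x == R) && (R \in cls I S))].
Proof.
apply/setP => x; rewrite [in RHS]inE.
case xc: (x \in cls I S).
  by case: (cls_LR xc) => ex; rewrite -ex eqxx xc ?andbT ?orbT.
apply/esym/negbTE; rewrite negb_or !negb_and; apply/andP; split.
  by case: (x =P L) => [ex|nex]; [rewrite -ex xc orbT | apply/orP; left; apply/eqP].
by case: (x =P R) => [ex|nex]; [rewrite -ex xc orbT | apply/orP; left; apply/eqP].
Qed.

Lemma count_eq1 x1 A : x1 \in cls I S -> A \in I -> AL = AR ->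
  #|cls I S :&: ext A| = Fs I S A.
Proof.
move=> x1c AI e.
have GS : Gs S = [set AL].
  case h1: (#|S| == 1).
    by rewrite /Gs h1; apply/eqP; rewrite eq_sym eqEcard sub1set ALS cards1 (eqP h1).
  rewrite Gs_gen ?h1 //; apply/setP => B; rewrite !inE -e orbb.
  by case: (B =P AL) => [->|_]; rewrite ?ALS ?andbF.
have DS : Ds I S = [set AL] by rewrite /Ds GS cards1 eqxx.
have cext : cls I S \subset ext AL.
  apply/subsetP => x /cls_LR []->; first exact: st_ext (inSI ALS).
  rewrite /R -e; exact: en_ext (inSI ALS).
have c0 : 0 < #|cls I S| by apply/card_gt0P; exists x1.
rewrite /Fs DS cards1 eqxx c0 !inE.
case: eqP => [->|AAL]; first by rewrite (setIidPl cext).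
apply/eqP; rewrite cards_eq0; apply/eqP/setP => x; rewrite in_setI in_set0.
apply/negbTE/negP => /andP[/(subsetP cext) xL xA].
by apply: AAL; apply: (ext_uniq AI (inSI ALS) xA xL).
Qed.

Lemma count_neq x1 A : x1 \in cls I S -> A \in I -> AL != AR ->
  #|cls I S :&: ext A| = Fs I S A.
Proof.
move=> x1c AI LR.
have ALI := inSI ALS; have ARI := inSI ARS.
have LR' : L != R by apply/eqP; exact: st_en ALI ARI.
have S2 : #|S| != 1.
  have : #|[set AL; AR]| <= #|S|.
    by apply: subset_leq_card; apply/subsetP => B; rewrite !inE => /orP[]/eqP->.
  by rewrite cards2 LR; case: #|S| => [|[]].
have GS : Gs S = [set AL; AR].
  rewrite Gs_gen //; apply/setP => B; rewrite !inE.
  apply/idP/idP => [/andP[_ ->] // | h]; rewrite h andbT.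
  by case/orP: h => /eqP ->.
set bL := L \in cls I S; set bR := R \in cls I S.
have DS : Ds I S = [set B | ((B == AL) && bL) || ((B == AR) && bR)].
  rewrite /Ds GS cards2 LR /=; apply/setP => B; rewrite !inE.
  case: (B =P AL) => [eL|nL]; case: (B =P AR) => [eR|nR].
  - by move: LR; rewrite -eL -eR eqxx.
  - by rewrite eL /= (K_AL x1c LR) orbF.
  - by rewrite eR /= (K_AR x1c LR).
  - by [].
have CE : cls I S :&: ext A =
    [set x | ((x == L) && (bL && (A == AL))) || ((x == R) && (bR && (A == AR)))].
  apply/setP => x; rewrite in_setI [in RHS]inE.
  case: (boolP (x \in cls I S)) => xc /=.
    case: (cls_LR xc) => ex.
      have bLt : bL by rewrite /bL -ex.
      rewrite ex eqxx (negbTE LR') bLt /= orbF; apply/idP/eqP => [h|->]; last exact: st_ext.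
      exact: ext_uniq AI ALI h (st_ext ALI).
    have bRt : bR by rewrite /bR -ex.
    rewrite ex eqxx eq_sym (negbTE LR') bRt /=; apply/idP/eqP => [h|->]; last exact: en_ext.
    exact: ext_uniq AI ARI h (en_ext ARI).
  apply/esym/negbTE; rewrite negb_or !negb_and; apply/andP; split.
    case: (x =P L) => [ex|//] /=.
    by have -> : bL = false by rewrite /bL -ex (negbTE xc).
  case: (x =P R) => [ex|//] /=.
  by have -> : bR = false by rewrite /bR -ex (negbTE xc).
have bLR : bL || bR.
  by case: (cls_LR x1c) => e; [rewrite /bL -e x1c | rewrite /bR -e x1c orbT].
have nb : ~~ ((A == AL) && (A == AR)).
  by apply/negP => /andP[/eqP -> /eqP e]; move: LR; rewrite e eqxx.
rewrite CE card2b // /Fs DS [in #|cls I S|]clsE !card2b // [A \in _]inE -/bL -/bR.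
move: bLR nb; case: (bL); case: (bR); case: (A == AL); case: (A == AR) => //.
Qed.

Lemma count_fixed x1 A : x1 \in cls I S -> A \in I -> #|cls I S :&: ext A| = Fs I S A.
Proof.
move=> x1c AI; case: (eqVneq AL AR) => e.
  exact: count_eq1 x1c AI e.
exact: count_neq x1c AI e.
Qed.

End Fixed.

Lemma count_main S A : A \in I -> #|cls I S :&: ext A| = Fs I S A.
Proof.
move=> AI.
case: (set_0Vmem (cls I S)) => [c0 | [x1 x1c]].
  by rewrite c0 set0I cards0 /Fs c0 cards0 andbF.
have eS : typ I x1 = S by move: x1c; rewrite inE => /eqP.
have SI : S \subset I by rewrite -eS; apply/subsetP => B; rewrite typP => /andP[].
have [A0 A0I xA0] := H_cov x1.
have A0S : A0 \in S by rewrite -eS typP A0I (subsetP (ext_sub A0)).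
case: (arg_maxnP (fun B => r (st B)) A0S) => AL ALS maxL.
case: (arg_minnP (fun B => r (en B)) A0S) => AR ARS minR.
have LleR : r (st AL) <= r (en AR).
  have /capP h := cls_cap x1c.
  move: (h _ ALS) (h _ ARS); rewrite !memI ?(subsetP SI) //.
  move=> /andP[h1 _] /andP[_ h2]; exact: leq_trans h1 h2.
exact: (@count_fixed S AL AR SI ALS ARS maxL minR LleR x1 A x1c AI).
Qed.

Lemma keycount S o :
  #|[set x | (typ I x, [pick A in I | x \in ext A]) == (S, o)]| =
  (if o is Some A then (if A \in I then Fs I S A else 0) else 0).
Proof.
case: o => [A|].
  case AI: (A \in I).
    rewrite -count_main //; apply: eq_card => x.
    rewrite in_setI [in LHS]inE xpair_eqE [x \in cls I S]inE; congr (_ && _).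
    case: pickP => [B /andP[BI xB] | h].
      apply/eqP/idP => [[<-] // | xA]; congr Some; exact: ext_uniq BI AI xB xA.
    by move: (h A); rewrite AI /= => ->.
  rewrite /=; apply/eqP; rewrite cards_eq0; apply/eqP/setP => x; rewrite inE xpair_eqE in_set0.
  case: pickP => [B /andP[BI _]|_]; last by rewrite andbF.
  apply/negbTE; rewrite negb_and; apply/orP; right; apply/eqP => -[e].
  by subst; rewrite BI in AI.
rewrite /=; apply/eqP; rewrite cards_eq0; apply/eqP/setP => x; rewrite inE xpair_eqE in_set0.
case: pickP => [B _|h]; first by rewrite andbF.
have [A AI xA] := H_cov x; by move: (h A); rewrite AI xA.
Qed.

End Geo.

Section Cov.
Variables (V : finType) (r : V -> nat) (I : {set {set V}}).
Hypothesis H_two : forall A, A \in I -> #|ext r A| = 2.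
Hypothesis H_dis : forall A B, A \in I -> B \in I -> A != B -> [disjoint ext r A & ext r B].
Hypothesis hcard : #|V| = 2 * #|I|.

Lemma cov_from_card x : exists2 A, A \in I & x \in ext r A.
Proof.
pose P := [set ext r A | A in I].
have inj : {in I &, injective (ext r)}.
  move=> A B AI BI e; apply/eqP; apply/negPn/negP => nAB.
  have := H_dis AI BI nAB; rewrite e -setI_eq0 setIid => /eqP e0.
  by move: (H_two BI); rewrite e0 cards0.
have tP : trivIset P.
  apply/trivIsetP => _ _ /imsetP[A AI ->] /imsetP[B BI ->] ne.
  by have := H_dis AI BI; apply; apply: contraNneq ne => ->.
have cP : #|cover P| = #|V|.
  rewrite -(eqP tP) (eq_bigr (fun _ => 2)); last first.
    by move=> _ /imsetP[A AI ->]; exact: H_two.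
  by rewrite sum_nat_const card_in_imset // hcard mulnC.
have : x \in cover P.
  have -> : cover P = setT by apply/eqP; rewrite eqEcard subsetT cardsT cP leqnn.
  by rewrite inE.
by case/bigcupP => _ /imsetP[A AI ->] xA; exists A.
Qed.
End Cov.


Lemma match_perm (V : finType) (K : eqType) (k1 k2 : V -> K) :
  (forall k, #|[set x | k1 x == k]| = #|[set x | k2 x == k]|) ->
  exists pi : V -> V, bijective pi /\ forall x, k2 (pi x) = k1 x.
Proof.
move=> hk.
pose s1 k := enum [set y | k1 y == k].
pose s2 k := enum [set y | k2 y == k].
have sz k : size (s1 k) = size (s2 k) by rewrite /s1 /s2 -!cardE.
have in1 x : x \in s1 (k1 x) by rewrite /s1 mem_enum inE.
have lt1 x : index x (s1 (k1 x)) < size (s2 (k1 x)) by rewrite -sz index_mem.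
pose pi x := nth x (s2 (k1 x)) (index x (s1 (k1 x))).
have hk2 x : k2 (pi x) = k1 x.
  have := mem_nth x (lt1 x); rewrite /s2 mem_enum inE => /eqP; exact.
exists pi; split => //.
apply: injF_bij => x y e.
have ek : k1 x = k1 y by rewrite -hk2 e hk2.
move: e; rewrite /pi ek (set_nth_default x y (lt1 y)) => /eqP.
have ly : index y (s1 (k1 y)) < size (s2 (k1 y)) := lt1 y.
have lx : index x (s1 (k1 y)) < size (s2 (k1 y)) by rewrite -ek.
rewrite nth_uniq ?enum_uniq // => /eqP ei.
rewrite -(nth_index x (in1 x)) ek ei (set_nth_default y x) ?sz //.
by rewrite nth_index // -ek.
Qed.


Lemma pickE (V : finType) (r : V -> nat) (I : {set {set V}})
  (H_dis : forall A B, A \in I -> B \in I -> A != B -> [disjoint ext r A & ext r B])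
  A x : A \in I -> ([pick B in I | x \in ext r B] == Some A) = (x \in ext r A).
Proof.
move=> AI; case: pickP => [B /andP[BI xB] | h].
  apply/eqP/idP => [[<-] // | xA]; congr Some; exact (ext_uniq H_dis BI AI xB xA).
by move: (h A); rewrite AI /= => ->.
Qed.

Unset Implicit Arguments.
Theorem lemma10 (N M : nat) (I : {set {set 'I_N}}) (J : {set {set 'I_M}}) :
  sharp I -> sharp J ->
  (exists phi : 'I_N -> 'I_M, hyp_iso I J phi) ->
  forall psi : 'I_N -> 'I_M, hyp_iso I J psi ->
  exists psi' : 'I_N -> 'I_M,
    hyp_iso I J psi' /\
    (forall A, A \in I ->
       psi' @: A = psi @: A /\ psi' @: extremes A = extremes (psi @: A)).
Proof.
move=> [hI1 hI2 hI3 hI4] [hJ1 hJ2 hJ3 hJ4] _ psi [bpsi eJ].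
have psi_inj : injective psi := bij_inj bpsi.
have [g gK Kg] := bpsi.
case: (set_0Vmem I) => [I0|[A0 A0I]].
  by exists psi; split => // A; rewrite I0 in_set0.
have [x0 _] : exists x0, x0 \in extremes A0.
  by apply/card_gt0P; rewrite hI3.
have memim x (A : {set 'I_N}) : (psi x \in psi @: A) = (x \in A) by rewrite mem_imset.
have imJ A : A \in I -> psi @: A \in J by move=> AI; rewrite -eJ; apply: imset_f.
pose r1 := fun x : 'I_N => nat_of_ord x.
pose r2 := fun x : 'I_N => nat_of_ord (psi x).
have r1_inj : injective r1 by move=> x y /val_inj.
have r2_inj : injective r2 by move=> x y /val_inj /psi_inj.
have e1 A : ext r1 A = extremes A by [].
have cardI : #|'I_N| = 2 * #|I| by rewrite card_ord.
have H1int A : A \in I -> exists a b, r1 a <= r1 b /\ A = rint r1 a b.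
  by move=> AI; case: (hI1 A AI) => a [b [hab ->]]; exists a, b.
have H1two A : A \in I -> #|ext r1 A| = 2 by move=> AI; rewrite e1 hI3.
have H1dis A B : A \in I -> B \in I -> A != B -> [disjoint ext r1 A & ext r1 B].
  by move=> AI BI AB; rewrite !e1; apply: hI4.
have H1cov := cov_from_card H1two H1dis cardI.
have ext2 A : psi @: ext r2 A = extremes (psi @: A).
  apply/setP => y; rewrite -(Kg y) memim /ext /extremes !inE memim.
  congr (_ && (_ || _)).
    apply/forallP/forallP => h z.
      by apply/implyP => /imsetP[w wA ->]; exact: (implyP (h w) wA).
    by apply/implyP => zA; have := implyP (h (psi z)); rewrite memim; apply.
  apply/forallP/forallP => h z.
    by apply/implyP => /imsetP[w wA ->]; exact: (implyP (h w) wA).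
  by apply/implyP => zA; have := implyP (h (psi z)); rewrite memim; apply.
have H2int A : A \in I -> exists a b, r2 a <= r2 b /\ A = rint r2 a b.
  move=> AI; case: (hJ1 _ (imJ A AI)) => a [b [hab eab]].
  exists (g a), (g b); rewrite /r2 !Kg; split => //.
  apply/setP => x; rewrite -memim eab !inE /r2 !Kg.
  done.
have H2two A : A \in I -> #|ext r2 A| = 2.
  by move=> AI; rewrite -(card_imset _ psi_inj) ext2 hJ3 // imJ.
have H2dis A B : A \in I -> B \in I -> A != B -> [disjoint ext r2 A & ext r2 B].
  move=> AI BI AB.
  have AB' : psi @: A != psi @: B by apply: contra_neq AB; apply: imset_inj.
  have := hJ4 _ _ (imJ A AI) (imJ B BI) AB'.
  rewrite -!ext2 -!setI_eq0 => /eqP e0; apply/eqP/setP => x.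
  move/setP: e0 => /(_ (psi x)); rewrite !in_setI !memim in_set0 => ->.
  by rewrite in_set0.
have H2cov := cov_from_card H2two H2dis cardI.
pose k1 x := (typ I x, [pick A in I | x \in ext r1 A]).
pose k2 x := (typ I x, [pick A in I | x \in ext r2 A]).
have hk : forall k, #|[set x | k1 x == k]| = #|[set x | k2 x == k]|.
  case=> S o.
  by rewrite (keycount x0 r1_inj H1int H1two H1dis H1cov)
             (keycount x0 r2_inj H2int H2two H2dis H2cov).
have [pi [bpi hpi]] := match_perm hk.
have pi_inj : injective pi := bij_inj bpi.
have typpi x : typ I (pi x) = typ I x by have := congr1 fst (hpi x).
have pickpi x : [pick A in I | pi x \in ext r2 A] = [pick A in I | x \in ext r1 A].
  by have := congr1 snd (hpi x).
have piA A : A \in I -> pi @: A = A.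
  move=> AI; apply/eqP; rewrite eqEcard card_imset // leqnn andbT.
  apply/subsetP => _ /imsetP[x xA ->].
  have : A \in typ I x by rewrite inE AI xA.
  by rewrite -typpi inE => /andP[].
have piE A : A \in I -> pi @: extremes A = ext r2 A.
  move=> AI; apply/eqP; rewrite eqEcard card_imset // -e1 H1two // H2two // leqnn andbT.
  apply/subsetP => _ /imsetP[x xA ->].
  rewrite -(pickE H2dis _ AI) pickpi (pickE H1dis _ AI) e1 //.
exists (psi \o pi); split.
  split; first exact: bij_comp.
  by rewrite -eJ; apply: eq_in_imset => A AI /=; rewrite (imset_comp psi pi) piA.
move=> A AI; rewrite !(imset_comp psi pi) piA // piE //; split => //.
Qed.
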